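(* Let $n\geq 1$ and $s\geq 1$ be integers. Let $G$ be a connected graph on $n+s$ vertices and let $S\subseteq V(G)$ with $|S|=s$. Suppose that every non-terminal level with respect to $S$ contains at least $2$ vertices. Then \[ \sigma(S)\leq \begin{cases} \frac{1}{4}(n^2+2n), & \text{if } 2\mid n,\\[2pt] \frac{1}{4}(n^2+2n+1), & \text{if } 2\nmid n. \end{cases} \]
   Context: For a connected graph $G$ and $\emptyset\neq S\subseteq V(G)$, $d_G(S,u)=\min\{d_G(u,v): v\in S\}$, and the status of $S$ is $\sigma(S)=\sigma_G(S)=\sum_{u\in V(G)} d_G(S,u)$. For $i\geq 1$, the $i$-th level with respect to $S$ is the set of vertices $u$ with $d_G(S,u)=i$. The terminal level is the nonempty level with the largest index $i$; the non-terminal levels are all levels $1,\dots,r$ preceding the terminal level $r+1$ (all of which are nonempty by connectivity). *)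

(* Defs.v *)
(* A simple graph is a symmetric irreflexive relation on a finType. *)
From mathcomp Require Import all_boot.
Set Implicit Arguments. Unset Strict Implicit. Unset Printing Implicit Defensive.

Section GraphDist.
Variables (T : finType) (e : rel T).

Definition walkn (k : nat) (x y : T) : bool :=
  [exists p : k.-tuple T, path e x p && (last x p == y)].

(* graph distance: least k with a k-edge walk from x to y
   (searched over 0..#|T|-1; equals #|T| if y is unreachable, which
   never happens in a connected graph) *)
Definition dist (x y : T) : nat := find (fun k => walkn k x y) (iota 0 #|T|).

Definition distS (S : {set T}) (u : T) : nat := \big[minn/#|T|]_(v in S) dist v u.

Definition status (S : {set T}) : nat := \sum_(u : T) distS S u.

Definition level (S : {set T}) (i : nat) : {set T} := [set u | distS S u == i].

Definition terminal_index (S : {set T}) : nat := \max_(u : T) distS S u.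

Definition connected_graph : Prop := forall x y : T, connect e x y.
End GraphDist.

(* Main.v *)
Require Import Defs.
From mathcomp Require Import all_boot.
From mathcomp Require Import zify.

Lemma sum_ind_card (T : finType) (A : pred T) :
  \sum_(u : T) (u \in A : nat) = #|A|.
Proof.
rewrite -sum1_card [RHS]big_mkcond; apply: eq_bigr => u _; by case: (u \in A).
Qed.

Lemma sum_lt_min (t d : nat) : \sum_(i < t) (i < d : nat) = minn t d.
Proof.
elim: t => [|t IH]; first by rewrite big_ord0 min0n.
rewrite big_ord_recr /= IH; case: (ltnP t d) => H /=. all: lia.
Qed.

Lemma sum_bound (t n : nat) (f : nat -> nat) :
  (forall i, i < t -> f i + 2 * i <= n) ->
  \sum_(i < t) f i + t * (t - 1) <= t * n.
Proof.
elim: t => [|t IH] H; first by rewrite big_ord0.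
rewrite big_ord_recr /=.
have := IH (fun i hi => H i (ltnW hi)).
have := H t (ltnSn t).
case: t {IH H} => [|t]; first by rewrite big_ord0 /=; lia.
rewrite !subn1 /=; nia.
Qed.

Lemma bigmin_le (I : eqType) (r : seq I) (P : pred I) (F : I -> nat) x u :
  u \in r -> P u -> \big[minn/x]_(v <- r | P v) F v <= F u.
Proof.
elim: r => // a r IH; rewrite inE big_cons => /orP [/eqP <- -> | ur Pu].
  exact: geq_minl.
case: (P a); last exact: IH.
exact: leq_trans (geq_minr _ _) (IH ur Pu).
Qed.

Theorem lemma6 (n s : nat) (T : finType) (e : rel T) (S : {set T}) :
  1 <= n -> 1 <= s ->
  symmetric e -> irreflexive e -> connected_graph e ->
  #|T| = n + s -> #|S| = s ->
  (forall i, 1 <= i < terminal_index e S -> 2 <= #|level e S i|) ->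
  (if odd n then 4 * status e S <= n ^ 2 + 2 * n + 1
   else 4 * status e S <= n ^ 2 + 2 * n).
Proof.
move=> n1 s1 _ _ _ cT cS Hlev.
set d := distS e S.
set t := terminal_index e S.
have dle : forall u, d u <= t by move=> u; exact: (leq_bigmax (F := d) u).
have dS : forall u, u \in S -> d u = 0.
  move=> u uS; apply/eqP; rewrite -leqn0.
  rewrite /d /distS; apply: leq_trans (@bigmin_le _ _ _ _ _ u (mem_index_enum u) uS) _.
  suff -> : dist e u u = 0 by [].
  rewrite /dist.
  have -> : #|T| = (#|T|.-1).+1 by rewrite cT; lia.
  rewrite /= /walkn.
  suff -> : [exists p : 0.-tuple T, path e u p && (last u p == u)] by [].
  apply/existsP; exists [tuple]; by rewrite /= eqxx.
pose c i := \sum_(u : T) (i < d u : nat).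
have Hstat : status e S = \sum_(i < t) c i.
  rewrite /status /c exchange_big /=; apply: eq_bigr => u _.
  rewrite sum_lt_min -/d; have := dle u; lia.
have Hc : forall i, i < t -> c i + 2 * i <= n.
  elim=> [|i IH] Hi.
  - rewrite /c muln0 addn0.
    apply: (@leq_trans (\sum_(u : T) (u \in ~: S : nat))).
      apply: leq_sum => u _; rewrite in_setC.
      case uS: (u \in S); last by case: (0 < d u).
      by rewrite dS.
    rewrite sum_ind_card; have := cardsC S; lia.
  - have := IH (ltnW Hi).
    have Hl := Hlev i.+1 (andb_true_intro (conj (isT : 0 < i.+1) Hi)).
    have Hsplit : c i = c i.+1 + \sum_(u : T) (u \in level e S i.+1 : nat).
      rewrite /c -big_split /=; apply: eq_bigr => u _.
      rewrite /level inE -/d.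
      case: (ltngtP i.+1 (d u)) => H /=; try lia.
    rewrite Hsplit sum_ind_card; lia.
have Hb := @sum_bound t n c Hc.
move: Hb; rewrite -Hstat; set st := status e S => Hb.
have [k [Hk|Hk]] : exists k, n = k.*2 \/ n = k.*2.+1.
  exists n./2; move: (odd_double_half n); case: (odd n) => /= H; [right|left]; lia.
- subst n; rewrite odd_double.
  case: t Hb {Hc Hstat dle Hlev} => [|t] Hb; first by move: Hb; rewrite mul0n; lia.
  rewrite subn1 /= in Hb; case: (leqP k t) => Htk.
    have := leq_mul Htk (leqnSn t) ; nia.
  have : (k - t.+1) * (k - t) >= 0 by [].
  nia.
- subst n; rewrite /= odd_double /=.
  case: t Hb {Hc Hstat dle Hlev} => [|t] Hb; first by move: Hb; rewrite mul0n; lia.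
  rewrite subn1 /= in Hb; case: (leqP t k) => Htk; nia.
Qed.
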